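(* Let $M=(E,r)$ be a polymatroid, fix a total order on $E$, and let $t\ge0$ be an integer. For each base $f$ of $M$ let $A(f)\subseteq E$ be the set of elements internally active with respect to $f$. Then the sets $\big(f+t\nabla_{A(f)}\big)\cap\mathbb Z^E$, for $f$ ranging over the bases of $M$, are pairwise disjoint and their union is $(P(M)+t\nabla)\cap\mathbb Z^E$. Here $f+t\nabla_{A(f)}$ has dimension $|A(f)|-1=|E|-1-\bar\iota(f)$, where $\bar\iota(f)=|E\setminus A(f)|$.
   Context: A polymatroid $M=(E,r)$ is a function $r:2^E\to\mathbb Z_{\ge0}$ with $r(\emptyset)=0$, $r$ monotone, and $r(X\cup Y)+r(X\cap Y)\le r(X)+r(Y)$. Its bases are the $\mathbf x\in\mathbb Z^E$ with $\sum_{i\in E}x_i=r(E)$ and $\sum_{i\in S}x_i\le r(S)$ for all $S$; $P(M)$ is their convex hull. For nonempty $S\subseteq E$, $\nabla_S=\operatorname{conv}\{-\mathbf e_i:i\in S\}$ and $\nabla=\nabla_E$. A transfer from $u_1$ to $u_2$ is possible in a base $f$ if $f-\mathbf e_{u_1}+\mathbf e_{u_2}$ is again a base. An element $u$ is internally active with respect to $f$ if no transfer is possible in $f$ from $u$ to a smaller element of $E$ (in particular, the smallest element and every $u$ with $f_u=0$ are internally active). *)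

(* Defs.v *)
From HB Require Import structures.
From mathcomp Require Import all_boot all_order all_algebra.
Set Implicit Arguments. Unset Strict Implicit. Unset Printing Implicit Defensive.
Import Order.TTheory GRing.Theory Num.Theory.
Local Open Scope ring_scope.

(* Ground set E = 'I_n, totally ordered by the natural order on ordinals. *)

Definition polymatroid (n : nat) (r : {set 'I_n} -> nat) : Prop :=
  [/\ r set0 = 0%N,
      (forall X Y : {set 'I_n}, X \subset Y -> (r X <= r Y)%N) &
      (forall X Y : {set 'I_n}, (r (X :|: Y) + r (X :&: Y) <= r X + r Y)%N)].

Definition is_base (n : nat) (r : {set 'I_n} -> nat) (x : {ffun 'I_n -> int}) : Prop :=
  \sum_i x i = (r setT)%:Z /\
  (forall S : {set 'I_n}, \sum_(i in S) x i <= (r S)%:Z).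

Definition transfer (n : nat) (f : {ffun 'I_n -> int}) (u1 u2 : 'I_n) : {ffun 'I_n -> int} :=
  [ffun i => f i - (i == u1)%:Z + (i == u2)%:Z].

Definition transfer_possible (n : nat) (r : {set 'I_n} -> nat)
  (f : {ffun 'I_n -> int}) (u1 u2 : 'I_n) : Prop :=
  is_base r (transfer f u1 u2).

Definition internally_active (n : nat) (r : {set 'I_n} -> nat)
  (f : {ffun 'I_n -> int}) (u : 'I_n) : Prop :=
  forall v : 'I_n, (v < u)%N -> ~ transfer_possible r f u v.

Definition in_PM (n : nat) (r : {set 'I_n} -> nat) (p : 'I_n -> rat) : Prop :=
  exists s : seq ({ffun 'I_n -> int} * rat),
    [/\ (forall k, k \in s -> is_base r k.1 /\ 0 <= k.2),
        \sum_(k <- s) k.2 = 1 &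
        (forall i, p i = \sum_(k <- s) k.2 * (k.1 i)%:~R)].

Definition in_PM_plus_tnabla (n : nat) (r : {set 'I_n} -> nat) (t : nat)
  (y : {ffun 'I_n -> int}) : Prop :=
  exists (p : 'I_n -> rat) (lam : 'I_n -> rat),
    [/\ in_PM r p,
        (forall i, 0 <= lam i),
        \sum_i lam i = 1 &
        (forall i, (y i)%:~R = p i - t%:R * lam i)].

Definition in_active_simplex (n : nat) (r : {set 'I_n} -> nat) (t : nat)
  (f : {ffun 'I_n -> int}) (y : {ffun 'I_n -> int}) : Prop :=
  exists lam : 'I_n -> rat,
    [/\ (forall i, 0 <= lam i),
        (forall i, lam i != 0 -> internally_active r f i),
        \sum_i lam i = 1 &
        (forall i, (y i)%:~R = (f i)%:~R - t%:R * lam i)].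

(* Main.v *)
Require Import Defs.
From HB Require Import structures.
From mathcomp Require Import all_boot all_order all_algebra.
From mathcomp Require Import zify ring lra.
From Stdlib Require Import Classical.
Set Implicit Arguments. Unset Strict Implicit. Unset Printing Implicit Defensive.
Import Order.TTheory GRing.Theory Num.Theory.
Local Open Scope ring_scope.

Lemma sumUI n (x : {ffun 'I_n -> int}) (A B : {set 'I_n}) :
  \sum_(i in A :|: B) x i + \sum_(i in A :&: B) x i =
  \sum_(i in A) x i + \sum_(i in B) x i.
Proof.
rewrite !(big_mkcond (fun i => i \in _)) -!big_split /=.
apply: eq_bigr => i _; rewrite in_setU in_setI.
by case: (i \in A); case: (i \in B); rewrite /= ?addr0 ?add0r.
Qed.

Definition tight n (r : {set 'I_n} -> nat) (x : {ffun 'I_n -> int}) (S : {set 'I_n}) :=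
  \sum_(i in S) x i == (r S)%:Z.
Definition sub_ok n (r : {set 'I_n} -> nat) (x : {ffun 'I_n -> int}) :=
  forall S : {set 'I_n}, \sum_(i in S) x i <= (r S)%:Z.

Lemma tightUI n (r : {set 'I_n} -> nat) x A B : polymatroid r -> sub_ok r x ->
  tight r x A -> tight r x B -> tight r x (A :|: B) && tight r x (A :&: B).
Proof.
case=> _ _ hs hx /eqP hA /eqP hB; rewrite /tight.
have := sumUI x A B; have := hx (A :|: B); have := hx (A :&: B).
have := hs A B; rewrite hA hB => h.
idtac.
move=> h1 h2 h3; apply/andP; split; apply/eqP; lia.
Qed.

Lemma sum_ind n (S : {set 'I_n}) (i : 'I_n) :
  \sum_(j in S) ((j == i)%:Z) = (i \in S)%:Z.
Proof.
case: (boolP (i \in S)) => hi.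
  rewrite (bigD1 i) //= eqxx big1 ?addr0 // => j /andP[_ /negbTE ->] //.
rewrite big1 // => j hj; case: eqP => // eji; by move: hi; rewrite -eji hj.
Qed.

Lemma sum_transfer n (f : {ffun 'I_n -> int}) u1 u2 (S : {set 'I_n}) :
  \sum_(j in S) transfer f u1 u2 j = \sum_(j in S) f j - (u1 \in S)%:Z + (u2 \in S)%:Z.
Proof.
rewrite /transfer.
under eq_bigr do rewrite ffunE.
by rewrite big_split /= sumrB sum_ind sum_ind.
Qed.

Lemma tight_bigcup n (r : {set 'I_n} -> nat) x : polymatroid r -> sub_ok r x ->
  tight r x (\bigcup_(S | tight r x S) S).
Proof.
move=> hr hx; apply: (big_ind (tight r x)) => //.
- case: hr => h0 _ _; by rewrite /tight big_set0 h0.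
- by move=> A B hA hB; case/andP: (tightUI hr hx hA hB).
Qed.

Lemma tight_bigcap n (r : {set 'I_n} -> nat) x u : polymatroid r -> is_base r x ->
  tight r x (\bigcap_(S | tight r x S && (u \in S)) S).
Proof.
move=> hr [hE hx]; apply: (big_ind (tight r x)) => //.
- by rewrite /tight; under eq_bigl do rewrite in_setT; rewrite hE.
- by move=> A B hA hB; case/andP: (tightUI hr hx hA hB).
- by move=> S /andP[].
Qed.

Lemma augment n (r : {set 'I_n} -> nat) (k : nat) : polymatroid r ->
  forall x : {ffun 'I_n -> int}, sub_ok r x -> \sum_i x i + k%:Z = (r setT)%:Z ->
  exists f, is_base r f /\ forall i, x i <= f i.
Proof.
move=> hr; elim: k => [|k IH] x hx hs.
  exists x; split => //; split => //; by rewrite -hs addr0.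
have [i hi] : exists i, forall S : {set 'I_n}, i \in S -> ~~ tight r x S.
  apply: NNPP => hne.
  have hall : forall i, exists S : {set 'I_n}, i \in S /\ tight r x S.
    move=> i; apply: NNPP => hn; apply: hne; exists i => S hS.
    by apply/negP => hT; apply: hn; exists S.
  have hU : \bigcup_(S | tight r x S) S = setT.
    apply/setP => i; rewrite in_setT; case: (hall i) => S [hS hT].
    by apply/bigcupP; exists S.
  have := tight_bigcup hr hx; rewrite hU /tight.
  under eq_bigl do rewrite in_setT.
  move/eqP => h; move: hs; rewrite h; lia.
pose x' := [ffun j => x j + (j == i)%:Z].
have hsum : forall S : {set 'I_n}, \sum_(j in S) x' j = \sum_(j in S) x j + (i \in S)%:Z.
  by move=> S; under eq_bigr do rewrite ffunE; rewrite big_split /= sum_ind.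
have hx' : sub_ok r x'.
  move=> S; rewrite hsum; case: (boolP (i \in S)) => hiS; last by rewrite addr0 hx.
  have := hi S hiS; rewrite /tight => hnt; have := hx S; move: hnt; lia.
have hs' : \sum_i x' i + k%:Z = (r setT)%:Z.
  have := hsum setT; rewrite in_setT.
  rewrite (eq_bigl (fun j => true)); last by move=> j; rewrite in_setT.
  rewrite [X in _ = X + _](eq_bigl (fun j => true)); last by move=> j; rewrite in_setT.
  move=> ->; move: hs; rewrite -addrA (_ : (true : nat)%:Z + k = k.+1%:Z); [by []|lia].
have [f [hf hxf]] := IH x' hx' hs'.
exists f; split => // j; have := hxf j; rewrite ffunE; lia.
Qed.

Lemma sum_ind_all n (i : 'I_n) : \sum_j ((j == i)%:Z) = 1.
Proof. by rewrite (bigD1 i) //= eqxx big1 ?addr0 // => j /negbTE ->. Qed.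

Lemma sum_transfer_all n (f : {ffun 'I_n -> int}) u1 u2 :
  \sum_j transfer f u1 u2 j = \sum_j f j - (u1 != u2)%:Z * 0.
Proof.
rewrite mulr0 subr0 /transfer.
under eq_bigr do rewrite ffunE.
by rewrite big_split /= sumrB !sum_ind_all subrK.
Qed.

Lemma exchange n (r : {set 'I_n} -> nat) f g u : polymatroid r ->
  is_base r f -> is_base r g -> g u < f u ->
  exists j, f j < g j /\ transfer_possible r g j u.
Proof.
move=> hr hf hg hu.
set T := \bigcap_(S | tight r g S && (u \in S)) S.
have hT : tight r g T by apply: tight_bigcap.
have uT : u \in T by apply/bigcapP => S /andP[].
have [j [jT hj]] : exists j, j \in T /\ f j < g j.
  apply: NNPP => hne.
  have hle : forall j, j \in T -> g j <= f j.
    move=> j jT; rewrite leNgt; apply/negP => hlt; apply: hne; by exists j.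
  have h1 : \sum_(i in T) g i < \sum_(i in T) f i.
    rewrite (bigD1 u) //= [X in _ < X](bigD1 u) //=.
    apply: ltr_leD => //; apply: ler_sum => i /andP[iT _]; exact: hle.
  case: hf => _ hf; have := hf T; move: hT h1; rewrite /tight => /eqP ->; lia.
exists j; split => //.
have hju : j != u by apply/eqP => e; move: hj hu; rewrite e; lia.
case: hg => hgE hgS; split.
  by rewrite sum_transfer_all mulr0 subr0.
move=> S; rewrite sum_transfer.
have := hgS S.
case: (boolP (u \in S)) => uS; case: (boolP (j \in S)) => jS /=; try lia.
  have hnt : ~~ tight r g S.
  apply/negP => tS; move/bigcapP: jT => hJ; move: jS; rewrite hJ //; by rewrite tS uS.
move: hnt; rewrite /tight subr0 => /eqP; move: (\sum_(i in S) g i) (r S) => a b; lia.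
Qed.

Lemma disj_aux n (r : {set 'I_n} -> nat) t f g y u : polymatroid r ->
  is_base r f -> is_base r g -> in_active_simplex r t f y -> in_active_simplex r t g y ->
  g u < f u -> (forall i : 'I_n, (i < u)%N -> f i = g i) -> False.
Proof.
move=> hr hf hg [lam [hl0 hlA hl1 hly]] [mu [hm0 hmA hm1 hmy]] hu hmin.
have [j [hj htr]] := exchange hr hf hg hu.
have hmj : mu j != 0.
  apply/eqP => e; have := hmy j; rewrite hly e mulr0 subr0 => e2.
  have : (g j)%:~R <= (f j)%:~R :> rat.
    rewrite -e2 lerBlDr lerDl; apply: mulr_ge0 => //; exact: ler0n.
  by rewrite ler_int leNgt hj.
have hact := hmA j hmj.
have hju : (u < j)%N.
  rewrite ltn_neqAle; apply/andP; split.
    apply/eqP => e; move: hj hu; rewrite (ord_inj e); lia.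
  rewrite leqNgt; apply/negP => hl; have := hmin j hl; move: hj; lia.
exact: hact u hju htr.
Qed.

Lemma disj n (r : {set 'I_n} -> nat) t f g y : polymatroid r ->
  is_base r f -> is_base r g -> in_active_simplex r t f y -> in_active_simplex r t g y ->
  f = g.
Proof.
move=> hr hf hg hsf hsg; apply: NNPP => hne.
have [i0 hi0] : exists i, f i != g i.
  apply: NNPP => hn; apply: hne; apply/ffunP => i; apply/eqP; apply: NNPP => h.
  by apply: hn; exists i; apply/negP.
case: (@arg_minnP _ i0 (fun i => f i != g i) (fun i : 'I_n => (i : nat)) hi0) => u hu hmin.
have hlt : forall i : 'I_n, (i < u)%N -> f i = g i.
  move=> i hi; apply/eqP; apply: contraTT hi => hi; rewrite -leqNgt; exact: hmin.
case: (ltgtP (f u) (g u)) => h.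
- apply: (disj_aux hr hg hf hsg hsf h) => i hi; by rewrite hlt.
- exact: (disj_aux hr hf hg hsf hsg h hlt).
- by move: hu; rewrite h eqxx.
Qed.

Lemma intr_sum n (S : {set 'I_n}) (x : 'I_n -> int) :
  (\sum_(i in S) x i)%:~R = \sum_(i in S) (x i)%:~R :> rat.
Proof. exact: mulrz_sumr. Qed.

Lemma sum_setT (R : nmodType) n (F : 'I_n -> R) : \sum_(i in [set: 'I_n]) F i = \sum_i F i.
Proof. by apply: eq_bigl => i; rewrite in_setT. Qed.

Lemma pm_bounds n (r : {set 'I_n} -> nat) t y : in_PM_plus_tnabla r t y ->
  sub_ok r y /\ \sum_i y i + t%:Z = (r setT)%:Z.
Proof.
case=> p [lam [[s [hs hs1 hp]] hl0 hl1 hy]].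
have key : forall S : {set 'I_n}, (\sum_(i in S) y i)%:~R =
   \sum_(k <- s) k.2 * (\sum_(i in S) k.1 i)%:~R - t%:R * \sum_(i in S) lam i :> rat.
  move=> S; rewrite intr_sum; under eq_bigr do rewrite hy.
  rewrite sumrB -mulr_sumr; congr (_ - _).
  under eq_bigr do rewrite hp; rewrite exchange_big /=.
  apply: eq_bigr => k _; rewrite intr_sum mulr_sumr //.
split.
  move=> S; rewrite -(ler_int rat) key.
  have h1 : \sum_(k <- s) k.2 * (\sum_(i in S) k.1 i)%:~R <= (r S)%:~R :> rat.
    have -> : (r S)%:~R = \sum_(k <- s) k.2 * (r S)%:~R :> rat by rewrite -mulr_suml hs1 mul1r.
    rewrite big_seq [X in _ <= X]big_seq; apply: ler_sum => k hk.
    have [hb hc] := hs k hk; apply: ler_wpM2l => //.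
    rewrite ler_int; by case: hb.
  have h2 : 0 <= t%:R * \sum_(i in S) lam i :> rat.
    apply: mulr_ge0; first exact: ler0n. by apply: sumr_ge0.
  apply: le_trans h1; rewrite lerBlDr lerDl //.
apply/eqP; rewrite -(eqr_int rat) intrD -sum_setT key.
have -> : \sum_(k <- s) k.2 * (\sum_(i in [set: 'I_n]) k.1 i)%:~R = \sum_(k <- s) k.2 * (r setT)%:~R :> rat.
  rewrite big_seq [in RHS]big_seq; apply: eq_bigr => k hk.
  have [[hb _] _] := hs k hk; by rewrite sum_setT hb.
by rewrite -mulr_suml hs1 mul1r sum_setT hl1 mulr1 subrK.
Qed.

Lemma sum_ind_mul n (i : 'I_n) (F : 'I_n -> int) : \sum_j (j == i)%:Z * F j = F i.
Proof. by rewrite (bigD1 i) //= eqxx mul1r big1 ?addr0 // => j /negbTE ->; rewrite mul0r. Qed.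

Definition Phi n (y f : {ffun 'I_n -> int}) := \sum_i (f i - y i) * (i : nat)%:Z.

Lemma Phi_transfer n (y f : {ffun 'I_n -> int}) u v :
  Phi y (transfer f u v) = Phi y f - (u : nat)%:Z + (v : nat)%:Z.
Proof.
rewrite /Phi /transfer.
under eq_bigr do rewrite ffunE.
rewrite -(sum_ind_mul u (fun j : 'I_n => (j : nat)%:Z)) -(sum_ind_mul v (fun j : 'I_n => (j : nat)%:Z)).
rewrite -sumrB -big_split /=; apply: eq_bigr => j _; ring.
Qed.

Lemma descend n (r : {set 'I_n} -> nat) (y : {ffun 'I_n -> int}) (N : nat) :
  forall f, is_base r f -> (forall i, y i <= f i) -> Phi y f < N%:Z ->
  exists g, [/\ is_base r g, (forall i, y i <= g i) &
                 (forall i, y i < g i -> internally_active r g i)].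
Proof.
elim: N => [|N IH] f hf hyf hP.
  have : 0 <= Phi y f.
    apply: sumr_ge0 => i _; apply: mulr_ge0; [by rewrite subr_ge0 | by []].
  move: hP; lia.
case: (classic (forall i, y i < f i -> internally_active r f i)) => hall.
  by exists f.
have [i [hi hni]] : exists i, y i < f i /\ ~ internally_active r f i.
  apply: NNPP => hn; apply: hall => i hi; apply: NNPP => ha; apply: hn; by exists i.
have [v [hv htr]] : exists v : 'I_n, (v < i)%N /\ transfer_possible r f i v.
  apply: NNPP => hn; apply: hni => v hv htr; apply: hn; by exists v.
apply: (IH (transfer f i v)) => //.
  move=> j; rewrite ffunE; have := hyf j.
  case: (eqVneq j i) => [->|hji]; case: (eqVneq j v) => [hjv|hjv] /=; try lia.
rewrite Phi_transfer; move: hP hv; lia.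
Qed.

Lemma intr_sum0 n (x : 'I_n -> int) :
  (\sum_i x i)%:~R = \sum_i (x i)%:~R :> rat.
Proof. exact: mulrz_sumr. Qed.

Theorem mainTheorem15 (n : nat) (r : {set 'I_n} -> nat) (t : nat) :
  polymatroid r ->
  (forall f g y : {ffun 'I_n -> int},
      is_base r f -> is_base r g ->
      in_active_simplex r t f y -> in_active_simplex r t g y -> f = g) /\
  (forall y : {ffun 'I_n -> int},
      in_PM_plus_tnabla r t y <->
      exists f : {ffun 'I_n -> int}, is_base r f /\ in_active_simplex r t f y).
Proof.
move=> hr; split.
  move=> f g y hf hg; exact: disj.
move=> y; split; last first.
  case=> f [hf [lam [hl0 hlA hl1 hy]]].
  exists (fun i => (f i)%:~R), lam; split => //.
  exists [:: (f, 1)]; split.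
  - by move=> k; rewrite inE => /eqP ->.
  - by rewrite big_seq1.
  - by move=> i; rewrite big_seq1 mul1r.
move=> hy.
have [k0 _] : exists k : 'I_n, true.
  case: hy => p [lam [_ _ hl1 _]]; apply: NNPP => hno.
  move: hl1; rewrite big1 // => i _; exfalso; apply: hno; by exists i.
have [hsub hsum] := pm_bounds hy.
have [f0 [hf0 hyf0]] := augment hr hsub hsum.
have hPl : Phi y f0 < (`|Phi y f0|.+1)%:Z by lia.
have [g [hg hyg hact]] := @descend _ _ y (`|Phi y f0|.+1) f0 hf0 hyf0 hPl.
exists g; split => //.
have hgE := hg.1.
have hsumd : \sum_i (g i - y i) = t%:Z by rewrite sumrB hgE -hsum addrC addKr.
have [ht0|tpos] := eqVneq t 0%N.
  have hgy : forall i, g i = y i.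
    move=> i; move: hsumd; rewrite ht0 => /eqP; rewrite psumr_eq0.
      by move/allP => h; apply/eqP; rewrite -subr_eq0; apply: h; rewrite mem_index_enum.
    by move=> j _; rewrite subr_ge0.
  case: (@arg_minnP _ k0 xpredT (fun i : 'I_n => (i : nat)) isT) => m _ hm.
  exists (fun i => ((i == m) : nat)%:R); split.
  - by move=> i; exact: ler0n.
  - move=> i; case: (eqVneq i m) => [-> _ v hv|hne]; last by move=> /eqP [].
    have := hm v isT; move: hv; lia.
  - by rewrite (bigD1 m) //= eqxx big1 ?addr0 // => j /negbTE ->.
  - by move=> i; rewrite ht0 mul0r subr0 hgy.
exists (fun i => (g i - y i)%:~R / t%:R); split.
- move=> i; apply: divr_ge0; last exact: ler0n.
  by rewrite ler0z subr_ge0.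
- move=> i; rewrite mulf_eq0 negb_or => /andP[h _]; apply: hact.
  have := hyg i; move: h; rewrite intr_eq0 subr_eq0; lia.
- rewrite -mulr_suml -intr_sum0 hsumd mulfV //.
  by rewrite pnatr_eq0.
- move=> i; rewrite mulrC divfK ?pnatr_eq0 //; rewrite intrB; ring.
Qed.
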